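(* Let $\mathbb{V}$ be a horizontal line through the identity in the first Heisenberg group $\mathbb{H}$, let $\mathcal{X}=\{\mathbb{V}*a:a\in\mathbb{H}\}$ be the space of right cosets of $\mathbb{V}$ with the metric $\operatorname{dist}_{cc}(\mathbb{V}*a,\mathbb{V}*a')$ (the Carnot–Carathéodory distance between the two cosets as subsets of $\mathbb{H}$), and let $\pi^R\colon\mathbb{H}\to\mathcal{X}$ be the quotient map $p\mapsto$ the right coset containing $p$. Then, with $\mathbb{H}$ carrying the Korányi metric, $\pi^R$ is locally David–Semmes $2$-regular, i.e. $(\mathbb{H},\mathcal{X},\pi^R)$ is a $2$-foliation. (The metric space $\mathcal{X}$ is isometric to the Grushin plane $(G,d_{cc})$.)
   Context: $\mathbb{H}=\mathbb{R}^2\times\mathbb{R}$ with $(x,t)*(x',t')=(x+x',t+t'+2(x_2x'_1-x_1x'_2))$, Korányi metric $d_{\mathbb{H}}(p,q)=\|p^{-1}*q\|_{\mathbb{H}}$, $\|(x,t)\|_{\mathbb{H}}=(|x|^4+t^2)^{1/4}$. A horizontal line is $\mathbb{V}=L\times\{0\}$ for a one-dimensional subspace $L\subseteq\mathbb{R}^2$. Let $X_1,X_2$ be the left-invariant vector fields agreeing with $\partial_{x_1},\partial_{x_2}$ at the identity; a smooth curve is horizontal if its tangent lies in $\operatorname{span}\{X_1,X_2\}$, its length computed declaring $X_1,X_2$ orthonormal, and $d_{cc}$ on $\mathbb{H}$ is the infimum of lengths of horizontal curves joining two points ($d_{cc}$ is comparable to $d_{\mathbb{H}}$). The Grushin plane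 $G$ is $\mathbb{R}^2$ with the metric $d_{cc}((u_1,v_1),(u_2,v_2))=\inf\int_a^b\sqrt{u'(s)^2+v'(s)^2/u(s)^2}\,ds$ over absolutely continuous curves $(u,v)$ joining the points with $v'(s)=0$ whenever $u(s)=0$. A surjection $\pi\colon X\to W$ between proper metric spaces is locally David–Semmes $s$-regular if for every compact $K\subseteq X$, $\pi|_K$ is Lipschitz and there are $C\ge1$, $r_0>0$ such that for every ball $B\subseteq W$ of radius $r<r_0$, $\pi^{-1}(B)\cap K$ can be covered by at most $Cr^{-s}$ balls in $X$ of radius $Cr$. *)

(* Defs.v *)
From Stdlib Require Import Reals Lra List ClassicalEpsilon.
Open Scope R_scope.

Definition H : Type := (R * R * R)%type.

Definition hmul (p q : H) : H :=
  let '(x1, x2, t) := p in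
  let '(y1, y2, s) := q in
  (x1 + y1, x2 + y2, t + s + 2 * (x2 * y1 - x1 * y2)).

Definition hinv (p : H) : H :=
  let '(x1, x2, t) := p in (- x1, - x2, - t).

Definition kor_norm (p : H) : R :=
  let '(x1, x2, t) := p in sqrt (sqrt ((x1 ^ 2 + x2 ^ 2) ^ 2 + t ^ 2)).

Definition dH (p q : H) : R := kor_norm (hmul (hinv p) q).

Definition is_glb (S : R -> Prop) (m : R) : Prop :=
  (forall x, S x -> m <= x) /\
  (forall m', (forall x, S x -> m' <= x) -> m' <= m).

Definition Rinf (S : R -> Prop) : R := epsilon (inhabits 0) (is_glb S).

(** X1 = d/dx1 + 2 x2 d/dt and X2 = d/dx2 - 2 x1 d/dt are the left-invariant
    fields agreeing with d/dx1, d/dx2 at the identity.  A C^1 curve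
    s |-> (g1 s, g2 s, g3 s), s in [a,b], with derivatives g1', g2', g3', is
    horizontal iff g3' = 2 (g2 g1' - g1 g2'); its length (X1, X2 orthonormal)
    is the integral of sqrt (g1'^2 + g2'^2). *)
Definition horizontal_C1_curve (a b : R) (g1 g2 g3 g1' g2' g3' : R -> R) : Prop :=
  a < b /\
  forall s, a <= s <= b ->
    derivable_pt_lim g1 s (g1' s) /\
    derivable_pt_lim g2 s (g2' s) /\
    derivable_pt_lim g3 s (g3' s) /\
    continuity_pt g1' s /\ continuity_pt g2' s /\ continuity_pt g3' s /\
    g3' s = 2 * (g2 s * g1' s - g1 s * g2' s).

Definition cc_length_of_curve_joining (p q : H) (L : R) : Prop :=
  exists (a b : R) (g1 g2 g3 g1' g2' g3' : R -> R),
    horizontal_C1_curve a b g1 g2 g3 g1' g2' g3' /\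
    (g1 a, g2 a, g3 a) = p /\ (g1 b, g2 b, g3 b) = q /\
    exists pr : Riemann_integrable (fun s => sqrt (g1' s ^ 2 + g2' s ^ 2)) a b,
      RiemannInt pr = L.

Definition dcc (p q : H) : R := Rinf (cc_length_of_curve_joining p q).

Definition set_dist_cc (A B : H -> Prop) : R :=
  Rinf (fun d => exists p q, A p /\ B q /\ d = dcc p q).

Definition hline (v : R * R) : H -> Prop :=
  fun p => exists s : R, p = (s * fst v, s * snd v, 0).

Definition right_coset (v : R * R) (a : H) : H -> Prop :=
  fun p => exists q, hline v q /\ p = hmul q a.

Definition coset_space (v : R * R) : Type :=
  { S : H -> Prop | exists a : H, S = right_coset v a }.

Definition coset_dist (v : R * R) (A B : coset_space v) : R :=
  set_dist_cc (proj1_sig A) (proj1_sig B).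

Definition piR (v : R * R) (p : H) : coset_space v :=
  exist _ (right_coset v p) (ex_intro _ p eq_refl).

Definition seq_compact {X : Type} (d : X -> X -> R) (K : X -> Prop) : Prop :=
  forall u : nat -> X, (forall n, K (u n)) ->
    exists (phi : nat -> nat) (l : X),
      (forall n m, (n < m)%nat -> (phi n < phi m)%nat) /\ K l /\
      Un_cv (fun n => d (u (phi n)) l) 0.

Definition locally_DS_regular {X W : Type} (dX : X -> X -> R) (dW : W -> W -> R)
    (pi : X -> W) (s : R) : Prop :=
  (forall w, exists x, pi x = w) /\
  forall K : X -> Prop, seq_compact dX K ->
    (exists Lip : R, forall x y, K x -> K y -> dW (pi x) (pi y) <= Lip * dX x y) /\
    exists C r0 : R, 1 <= C /\ 0 < r0 /\
      forall (w : W) (r : R), 0 < r < r0 ->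
        exists centers : list X,
          INR (length centers) <= C * Rpower r (- s) /\
          forall x, K x -> dW w (pi x) < r ->
            exists c, In c centers /\ dX c x < C * r.

(* Main.v *)
Require Import Defs.
From Stdlib Require Import Reals Lra Psatz ClassicalEpsilon Classical List ProofIrrelevance ZArith.
From Coquelicot Require Import Coquelicot.
Open Scope R_scope.

Lemma glb_exists (S : R -> Prop) :
  (exists x, S x) -> (forall x, S x -> 0 <= x) -> exists m, is_glb S m.
Proof.
  intros [x0 Hx0] Hlb.
  destruct (completeness (fun y => S (- y))) as [m [Hm1 Hm2]].
  - exists 0. intros y Hy. specialize (Hlb _ Hy). lra.
  - exists (- x0). now rewrite Ropp_involutive.
  - exists (- m). split.
    + intros x Hx. assert (- x <= m) by (apply Hm1; now rewrite Ropp_involutive). lra.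
    + intros m' Hm'. assert (m <= - m'); [|lra].
      apply Hm2. intros y Hy. specialize (Hm' _ Hy). lra.
Qed.

Lemma Rinf_glb (S : R -> Prop) :
  (exists x, S x) -> (forall x, S x -> 0 <= x) -> is_glb S (Rinf S).
Proof.
  intros H1 H2. unfold Rinf. apply epsilon_spec. now apply glb_exists.
Qed.

Lemma Rinf_le (S : R -> Prop) x :
  S x -> (forall y, S y -> 0 <= y) -> Rinf S <= x.
Proof.
  intros Hx H. destruct (Rinf_glb S (ex_intro _ x Hx) H) as [A _]. now apply A.
Qed.

Lemma Rinf_ge0 (S : R -> Prop) :
  (exists x, S x) -> (forall y, S y -> 0 <= y) -> 0 <= Rinf S.
Proof.
  intros Hx H. destruct (Rinf_glb S Hx H) as [_ B]. apply B. exact H.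
Qed.

Lemma Rinf_lt (S : R -> Prop) r :
  (exists x, S x) -> (forall y, S y -> 0 <= y) -> Rinf S < r -> exists x, S x /\ x < r.
Proof.
  intros Hx H Hr. destruct (Rinf_glb S Hx H) as [_ B].
  apply NNPP. intro Hn.
  assert (r <= Rinf S); [|lra].
  apply B. intros y Hy. apply Rnot_lt_le. intro Hyr. apply Hn. now exists y.
Qed.

Lemma sqrt_sqrt_le (A k : R) : 0 <= k -> A <= k ^ 4 -> sqrt (sqrt A) <= k.
Proof.
  intros Hk HA.
  assert (E : k = sqrt (sqrt (k ^ 4))).
  { replace (k ^ 4) with ((k ^ 2) ^ 2) by ring.
    rewrite sqrt_pow2 by (apply pow_le; lra).
    rewrite sqrt_pow2 by lra. reflexivity. }
  rewrite E. apply sqrt_le_1_alt. apply sqrt_le_1_alt. exact HA.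
Qed.

Lemma kor_nonneg p : 0 <= kor_norm p.
Proof. destruct p as [[a b] c]. unfold kor_norm. apply sqrt_pos. Qed.

Lemma kor_pow4 a b c : kor_norm (a, b, c) ^ 4 = (a ^ 2 + b ^ 2) ^ 2 + c ^ 2.
Proof.
  unfold kor_norm.
  assert (H0 : 0 <= (a ^ 2 + b ^ 2) ^ 2 + c ^ 2) by (apply Rplus_le_le_0_compat; apply pow2_ge_0).
  replace (sqrt (sqrt ((a ^ 2 + b ^ 2) ^ 2 + c ^ 2)) ^ 4) with
    ((sqrt (sqrt ((a ^ 2 + b ^ 2) ^ 2 + c ^ 2)) ^ 2) ^ 2) by ring.
  rewrite pow2_sqrt by apply sqrt_pos. rewrite pow2_sqrt by exact H0. reflexivity.
Qed.

Lemma my_pow_lt x y n : 0 <= x < y -> (0 < n)%nat -> x ^ n < y ^ n.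
Proof.
  intros [H1 H2] Hn. induction n as [|n IH]; [lia|].
  destruct n as [|n]; [simpl; lra|].
  assert (x ^ S n < y ^ S n) by (apply IH; lia).
  assert (0 <= x ^ S n) by (apply pow_le; lra).
  simpl in *. nra.
Qed.

Lemma kor_ge a b c :
  Rabs a <= kor_norm (a, b, c) /\ Rabs b <= kor_norm (a, b, c) /\
  Rabs c <= kor_norm (a, b, c) ^ 2.
Proof.
  pose proof (kor_pow4 a b c) as E. pose proof (kor_nonneg (a, b, c)) as HK.
  set (K := kor_norm (a, b, c)) in *.
  assert (Ha : a ^ 2 = Rabs a ^ 2) by (symmetry; apply pow2_abs).
  assert (Hb : b ^ 2 = Rabs b ^ 2) by (symmetry; apply pow2_abs).
  assert (Hc : c ^ 2 = Rabs c ^ 2) by (symmetry; apply pow2_abs).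
  pose proof (Rabs_pos a). pose proof (Rabs_pos b). pose proof (Rabs_pos c).
  rewrite Ha, Hb, Hc in E.
  set (x := Rabs a) in *. set (y := Rabs b) in *. set (z := Rabs c) in *.
  split; [|split].
  - destruct (Rle_lt_dec x K) as [h|h]; [exact h|].
    exfalso. assert (K ^ 4 < x ^ 4).
    { apply my_pow_lt; [lra| lia]. }
    assert (0 <= y ^ 2) by apply pow2_ge_0. assert (0 <= z ^ 2) by apply pow2_ge_0.
    nra.
  - destruct (Rle_lt_dec y K) as [h|h]; [exact h|].
    exfalso. assert (K ^ 4 < y ^ 4).
    { apply my_pow_lt; [lra| lia]. }
    assert (0 <= x ^ 2) by apply pow2_ge_0. assert (0 <= z ^ 2) by apply pow2_ge_0.
    nra.
  - destruct (Rle_lt_dec z (K ^ 2)) as [h|h]; [exact h|].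
    exfalso. assert (0 <= K ^ 2) by apply pow2_ge_0.
    assert ((K ^ 2) ^ 2 < z ^ 2) by (apply my_pow_lt; [lra| lia]).
    assert (0 <= x ^ 2 + y ^ 2) by (apply Rplus_le_le_0_compat; apply pow2_ge_0).
    assert (0 <= (x ^ 2 + y ^ 2) ^ 2) by apply pow2_ge_0.
    replace ((K ^ 2) ^ 2) with (K ^ 4) in * by ring. lra.
Qed.

Lemma kor_bound a b c M :
  0 <= M -> Rabs a <= M -> Rabs b <= M -> Rabs c <= M ^ 2 -> kor_norm (a, b, c) <= 2 * M.
Proof.
  intros HM Ha Hb Hc. unfold kor_norm. apply sqrt_sqrt_le; [lra|].
  assert (a ^ 2 <= M ^ 2).
  { rewrite <- (pow2_abs a). apply pow_incr. split; [apply Rabs_pos|exact Ha]. }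
  assert (b ^ 2 <= M ^ 2).
  { rewrite <- (pow2_abs b). apply pow_incr. split; [apply Rabs_pos|exact Hb]. }
  assert (c ^ 2 <= (M ^ 2) ^ 2).
  { rewrite <- (pow2_abs c). apply pow_incr. split; [apply Rabs_pos|exact Hc]. }
  assert (0 <= a ^ 2) by apply pow2_ge_0. assert (0 <= b ^ 2) by apply pow2_ge_0.
  assert (a ^ 2 + b ^ 2 <= 2 * M ^ 2) by lra.
  assert ((a ^ 2 + b ^ 2) ^ 2 <= (2 * M ^ 2) ^ 2).
  { apply pow_incr. lra. }
  assert (0 <= M ^ 4) by (apply pow_le; lra).
  replace ((M ^ 2) ^ 2) with (M ^ 4) in * by ring.
  replace ((2 * M ^ 2) ^ 2) with (4 * M ^ 4) in * by ring.
  replace ((2 * M) ^ 4) with (16 * M ^ 4) by ring. lra.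
Qed.

Lemma kor_quasi p q : kor_norm (hmul p q) <= 4 * (kor_norm p + kor_norm q).
Proof.
  destruct p as [[p1 p2] p3]; destruct q as [[q1 q2] q3]. simpl hmul.
  destruct (kor_ge p1 p2 p3) as [A1 [A2 A3]].
  destruct (kor_ge q1 q2 q3) as [B1 [B2 B3]].
  set (P := kor_norm (p1, p2, p3)) in *. set (Q := kor_norm (q1, q2, q3)) in *.
  pose proof (kor_nonneg (p1,p2,p3)). pose proof (kor_nonneg (q1,q2,q3)).
  fold P Q in H, H0.
  replace (4 * (P + Q)) with (2 * (2 * (P + Q))) by ring.
  apply kor_bound; [lra| | |].
  - eapply Rle_trans; [apply Rabs_triang|]. lra.
  - eapply Rle_trans; [apply Rabs_triang|]. lra.
  - assert (Rabs (2 * (p2 * q1 - p1 * q2)) <= 4 * P * Q).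
    { rewrite Rabs_mult, (Rabs_pos_eq 2) by lra. unfold Rminus.
      eapply Rle_trans. { apply Rmult_le_compat_l; [lra|]. apply Rabs_triang. }
      rewrite Rabs_Ropp, !Rabs_mult.
      assert (Rabs p2 * Rabs q1 <= P * Q) by (apply Rmult_le_compat; auto using Rabs_pos).
      assert (Rabs p1 * Rabs q2 <= P * Q) by (apply Rmult_le_compat; auto using Rabs_pos).
      lra. }
    eapply Rle_trans; [apply Rabs_triang|].
    eapply Rle_trans. { apply Rplus_le_compat_r. apply Rabs_triang. }
    nra.
Qed.

Lemma kor_inv p : kor_norm (hinv p) = kor_norm p.
Proof.
  destruct p as [[a b] c]. unfold hinv, kor_norm. f_equal. f_equal. ring.
Qed.

Lemma hmul_assoc p q r : hmul (hmul p q) r = hmul p (hmul q r).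
Proof.
  destruct p as [[p1 p2] p3]; destruct q as [[q1 q2] q3]; destruct r as [[r1 r2] r3].
  simpl. f_equal; [f_equal|]; ring.
Qed.

Lemma hinv_l p : hmul (hinv p) p = (0, 0, 0).
Proof. destruct p as [[a b] c]. simpl. f_equal; [f_equal|]; ring. Qed.
Lemma hinv_r p : hmul p (hinv p) = (0, 0, 0).
Proof. destruct p as [[a b] c]. simpl. f_equal; [f_equal|]; ring. Qed.
Lemma hmul_0l p : hmul (0, 0, 0) p = p.
Proof. destruct p as [[a b] c]. simpl. f_equal; [f_equal|]; ring. Qed.
Lemma hmul_0r p : hmul p (0, 0, 0) = p.
Proof. destruct p as [[a b] c]. simpl. f_equal; [f_equal|]; ring. Qed.
Lemma hinv_mul p q : hinv (hmul p q) = hmul (hinv q) (hinv p).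
Proof.
  destruct p as [[p1 p2] p3]; destruct q as [[q1 q2] q3]. simpl. f_equal; [f_equal|]; ring.
Qed.
Lemma hinv_inv p : hinv (hinv p) = p.
Proof. destruct p as [[a b] c]. simpl. f_equal; [f_equal|]; ring. Qed.

Lemma dH_sym p q : dH p q = dH q p.
Proof. unfold dH. rewrite <- kor_inv, hinv_mul, hinv_inv. reflexivity. Qed.

Lemma deriv_cont f : (forall x, exists l, derivable_pt_lim f x l) -> forall x, continuity_pt f x.
Proof.
  intros H x. destruct (H x) as [l Hl].
  apply (derivable_continuous_pt f x (exist _ l Hl)).
Qed.

Section Curve.
Variables p1 p2 p3 z1 z2 al be : R.

Definition c1 s := s - 3 * s ^ 2 + 2 * s ^ 3.
Definition c1d s := 1 - 6 * s + 6 * s ^ 2.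
Definition c2 s := s - 6 * s ^ 2 + 10 * s ^ 3 - 5 * s ^ 4.
Definition c2d s := 1 - 12 * s + 30 * s ^ 2 - 20 * s ^ 3.
Definition h1 s := z1 * s + al * c1 s.
Definition h1d s := z1 + al * c1d s.
Definition h2 s := z2 * s + be * c2 s.
Definition h2d s := z2 + be * c2d s.
Definition h3 s := 2 * (z2 * al * (- s ^ 3 + s ^ 4) + z1 * be * (2 * s ^ 3 - 5 * s ^ 4 + 3 * s ^ 5)
   + al * be * (s ^ 3 - 4 * s ^ 4 + 33 / 5 * s ^ 5 - 5 * s ^ 6 + 10 / 7 * s ^ 7)).
Definition G1 s := p1 + h1 s.
Definition G2 s := p2 + h2 s.
Definition G3 s := p3 + h3 s + 2 * (p2 * h1 s - p1 * h2 s).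
Definition G3d s := 2 * (G2 s * h1d s - G1 s * h2d s).

Lemma G1_der x : derivable_pt_lim G1 x (h1d x).
Proof. apply is_derive_Reals. unfold G1, h1, h1d, c1, c1d. auto_derive; [exact I|ring]. Qed.
Lemma G2_der x : derivable_pt_lim G2 x (h2d x).
Proof. apply is_derive_Reals. unfold G2, h2, h2d, c2, c2d. auto_derive; [exact I|ring]. Qed.
Lemma G3_der x : derivable_pt_lim G3 x (G3d x).
Proof.
  apply is_derive_Reals. unfold G3, G3d, G1, G2, h3, h1, h2, h1d, h2d, c1, c2, c1d, c2d.
  auto_derive; [exact I|field].
Qed.
Lemma h1d_der x : derivable_pt_lim h1d x (al * (-6 + 12 * x)).
Proof. apply is_derive_Reals. unfold h1d, c1d. auto_derive; [exact I|ring]. Qed.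
Lemma h2d_der x : derivable_pt_lim h2d x (be * (-12 + 60 * x - 60 * x ^ 2)).
Proof. apply is_derive_Reals. unfold h2d, c2d. auto_derive; [exact I|ring]. Qed.
Lemma G3d_der x : exists l, derivable_pt_lim G3d x l.
Proof.
  eexists. apply is_derive_Reals. unfold G3d, G1, G2, h1, h2, h1d, h2d, c1, c2, c1d, c2d.
  auto_derive; [exact I|reflexivity].
Qed.

Definition lenf s := sqrt (h1d s ^ 2 + h2d s ^ 2).

Lemma lenf_cont x : continuity_pt lenf x.
Proof.
  unfold lenf.
  change (continuity_pt (comp sqrt (fun s => h1d s ^ 2 + h2d s ^ 2)) x).
  apply continuity_pt_comp.
  - apply deriv_cont. intro y. eexists. apply is_derive_Reals.
    unfold h1d, h2d, c1d, c2d. auto_derive; [exact I|reflexivity].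
  - apply continuity_pt_sqrt. apply Rplus_le_le_0_compat; apply pow2_ge_0.
Qed.

Lemma sqrt_sum_le a b : sqrt (a ^ 2 + b ^ 2) <= Rabs a + Rabs b.
Proof.
  rewrite <- (sqrt_pow2 (Rabs a + Rabs b)) by (pose proof (Rabs_pos a); pose proof (Rabs_pos b); lra).
  apply sqrt_le_1_alt.
  rewrite <- (pow2_abs a), <- (pow2_abs b).
  pose proof (Rabs_pos a); pose proof (Rabs_pos b). nra.
Qed.

Lemma lenf_bound s : 0 < s < 1 -> lenf s <= Rabs z1 + Rabs z2 + 13 * Rabs al + 63 * Rabs be.
Proof.
  intros Hs. unfold lenf. eapply Rle_trans; [apply sqrt_sum_le|].
  assert (0 <= s ^ 2 <= 1) by (split; [apply pow2_ge_0|]; nra).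
  assert (0 <= s ^ 3 <= 1) by (split; [apply pow_le; lra|]; simpl; nra).
  assert (Rabs (c1d s) <= 13) by (unfold c1d; apply Rabs_le; lra).
  assert (Rabs (c2d s) <= 63) by (unfold c2d; apply Rabs_le; lra).
  unfold h1d, h2d.
  pose proof (Rabs_triang z1 (al * c1d s)). pose proof (Rabs_triang z2 (be * c2d s)).
  rewrite Rabs_mult in *.
  assert (Rabs al * Rabs (c1d s) <= Rabs al * 13) by (apply Rmult_le_compat_l; auto using Rabs_pos).
  assert (Rabs be * Rabs (c2d s) <= Rabs be * 63) by (apply Rmult_le_compat_l; auto using Rabs_pos).
  lra.
Qed.

Lemma curve_len :
  exists L, cc_length_of_curve_joining (p1, p2, p3) (hmul (p1, p2, p3) (z1, z2, 2 * (al * be) / 35)) L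
    /\ L <= Rabs z1 + Rabs z2 + 13 * Rabs al + 63 * Rabs be.
Proof.
  assert (pr : Riemann_integrable lenf 0 1).
  { apply continuity_implies_RiemannInt; [lra|]. intros; apply lenf_cont. }
  exists (RiemannInt pr). split.
  - exists 0, 1, G1, G2, G3, h1d, h2d, G3d. split; [|split; [|split]].
    + split; [lra|]. intros s _. split; [apply G1_der|]. split; [apply G2_der|].
      split; [apply G3_der|]. split.
      { apply deriv_cont. intro y. eexists. apply h1d_der. }
      split. { apply deriv_cont. intro y. eexists. apply h2d_der. }
      split. { apply deriv_cont. apply G3d_der. }
      reflexivity.
    + unfold G1, G2, G3, h1, h2, h3, c1, c2. f_equal; [f_equal|]; ring.
    + unfold G1, G2, G3, h1, h2, h3, c1, c2. simpl. f_equal; [f_equal|]; field.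
    + exists pr. reflexivity.
  - set (M := Rabs z1 + Rabs z2 + 13 * Rabs al + 63 * Rabs be).
    pose proof (RiemannInt_P19 pr (RiemannInt_P14 0 1 M) ltac:(lra)) as HH.
    rewrite RiemannInt_P15 in HH.
    assert (RiemannInt pr <= M * (1 - 0)); [|lra].
    apply HH. intros; apply lenf_bound; lra.
Qed.
End Curve.

Lemma len_nonneg p q L : cc_length_of_curve_joining p q L -> 0 <= L.
Proof.
  intros (a & b & g1 & g2 & g3 & g1' & g2' & g3' & [Hab _] & _ & _ & pr & <-).
  pose proof (RiemannInt_P19 (RiemannInt_P14 a b 0) pr ltac:(lra)) as HH.
  rewrite RiemannInt_P15 in HH.
  assert (0 * (b - a) <= RiemannInt pr); [|lra].
  apply HH. intros; apply sqrt_pos.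
Qed.

Lemma sqrt_abs_le x : sqrt (Rabs x) <= sqrt (Rabs x) . Proof. lra. Qed.

Lemma dcc_up p q : exists L, cc_length_of_curve_joining p q L /\ L <= 1200 * dH p q.
Proof.
  destruct p as [[p1 p2] p3].
  assert (Eq : q = hmul (p1, p2, p3) (hmul (hinv (p1, p2, p3)) q))
    by (rewrite <- hmul_assoc, hinv_r, hmul_0l; reflexivity).
  unfold dH. destruct (hmul (hinv (p1, p2, p3)) q) as [[z1 z2] t] eqn:Ez.
  destruct (kor_ge z1 z2 t) as [K1 [K2 K3]].
  set (K := kor_norm (z1, z2, t)) in *.
  pose proof (kor_nonneg (z1, z2, t)) as HK. fold K in HK.
  assert (Hst : sqrt (Rabs t) <= K).
  { rewrite <- (sqrt_pow2 K HK). apply sqrt_le_1_alt. exact K3. }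
  destruct (Rle_lt_dec 0 t) as [Ht|Ht].
  - destruct (curve_len p1 p2 p3 z1 z2 (sqrt t) (35 / 2 * sqrt t)) as [L [HL1 HL2]].
    replace (2 * (sqrt t * (35 / 2 * sqrt t)) / 35) with t in HL1.
    2:{ replace (2 * (sqrt t * (35 / 2 * sqrt t)) / 35) with (sqrt t * sqrt t) by field.
        rewrite sqrt_sqrt; lra. }
    rewrite <- Eq in HL1. exists L. split; [exact HL1|].
    rewrite Rabs_pos_eq in Hst by lra.
    rewrite Rabs_mult, (Rabs_pos_eq (35/2)) in HL2 by lra.
    rewrite (Rabs_pos_eq (sqrt t)) in HL2 by apply sqrt_pos.
    pose proof (sqrt_pos t). lra.
  - destruct (curve_len p1 p2 p3 z1 z2 (sqrt (- t)) (- (35 / 2) * sqrt (- t))) as [L [HL1 HL2]].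
    replace (2 * (sqrt (- t) * (- (35 / 2) * sqrt (- t))) / 35) with t in HL1.
    2:{ replace (2 * (sqrt (- t) * (- (35 / 2) * sqrt (- t))) / 35) with (- (sqrt (- t) * sqrt (- t))) by field.
        rewrite sqrt_sqrt; lra. }
    rewrite <- Eq in HL1. exists L. split; [exact HL1|].
    rewrite Rabs_left in Hst by lra.
    rewrite Rabs_mult, (Rabs_left (- (35 / 2))) in HL2 by lra.
    rewrite (Rabs_pos_eq (sqrt (- t))) in HL2 by apply sqrt_pos.
    pose proof (sqrt_pos (- t)). lra.
Qed.

Lemma dcc_ne p q : exists L, cc_length_of_curve_joining p q L.
Proof. destruct (dcc_up p q) as [L [H _]]. eauto. Qed.

Lemma dcc_le p q L : cc_length_of_curve_joining p q L -> dcc p q <= L.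
Proof. intros H. apply Rinf_le; [exact H|]. apply len_nonneg. Qed.

Lemma dcc_nonneg p q : 0 <= dcc p q.
Proof. apply Rinf_ge0; [apply dcc_ne|apply len_nonneg]. Qed.

Lemma dcc_bound p q : dcc p q <= 1200 * dH p q.
Proof. destruct (dcc_up p q) as [L [H1 H2]]. eapply Rle_trans; [apply dcc_le; eauto|exact H2]. Qed.

Lemma dcc_lt p q r : dcc p q < r -> exists L, cc_length_of_curve_joining p q L /\ L < r.
Proof. apply Rinf_lt; [apply dcc_ne|apply len_nonneg]. Qed.

Lemma set_dist_le (A B : H -> Prop) x y : A x -> B y -> set_dist_cc A B <= dcc x y.
Proof.
  intros Hx Hy. apply Rinf_le.
  - exists x, y. auto.
  - intros d (p & q & _ & _ & ->). apply dcc_nonneg.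
Qed.

Lemma set_dist_lt (A B : H -> Prop) r : (exists x, A x) -> (exists y, B y) ->
  set_dist_cc A B < r -> exists x y, A x /\ B y /\ dcc x y < r.
Proof.
  intros [x Hx] [y Hy] Hr. apply Rinf_lt in Hr.
  - destruct Hr as [d [(p & q & Hp & Hq & ->) Hd]]. eauto.
  - exists (dcc x y). exists x, y. auto.
  - intros d (p & q & _ & _ & ->). apply dcc_nonneg.
Qed.

Lemma coset_self v a : right_coset v a a.
Proof.
  exists (0, 0, 0). split.
  - exists 0. simpl. f_equal; try f_equal; ring.
  - now rewrite hmul_0l.
Qed.

Lemma RInt_abs_bound (h f : R -> R) a s c :
  a <= s -> ex_RInt h a s -> ex_RInt f a s ->
  (forall x, a < x < s -> Rabs (h x) <= c * f x) ->
  Rabs (RInt h a s) <= c * RInt f a s.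
Proof.
  intros Has Hh Hf Hb.
  assert (Ecf : RInt (fun x => c * f x) a s = c * RInt f a s) by exact (RInt_scal f a s c Hf).
  assert (Xcf : ex_RInt (fun x => c * f x) a s) by exact (ex_RInt_scal f a s c Hf).
  assert (Eo : RInt (fun x => - h x) a s = - RInt h a s) by exact (RInt_opp h a s Hh).
  assert (Xo : ex_RInt (fun x => - h x) a s) by exact (ex_RInt_opp h a s Hh).
  apply Rabs_le. split.
  - assert (RInt (fun x => - h x) a s <= RInt (fun x => c * f x) a s).
    { apply RInt_le; auto. intros x Hx. specialize (Hb x Hx).
      pose proof (Rle_abs (- h x)). rewrite Rabs_Ropp in H. lra. }
    lra.
  - assert (RInt h a s <= RInt (fun x => c * f x) a s).
    { apply RInt_le; auto. intros x Hx. specialize (Hb x Hx).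
      pose proof (Rle_abs (h x)). lra. }
    lra.
Qed.

Lemma cont_of_pt f x : continuity_pt f x -> continuous f x.
Proof. intro H. now apply continuity_pt_filterlim. Qed.

Lemma ftc (g g' : R -> R) a s :
  a <= s ->
  (forall x, a <= x <= s -> derivable_pt_lim g x (g' x)) ->
  (forall x, a <= x <= s -> continuity_pt g' x) ->
  ex_RInt g' a s /\ RInt g' a s = g s - g a.
Proof.
  intros Has Hd Hc.
  assert (HI : is_RInt g' a s (minus (g s) (g a))).
  { apply (@is_RInt_derive R_CompleteNormedModule g g').
    - intros x Hx. rewrite Rmin_left, Rmax_right in Hx by lra. apply is_derive_Reals. auto.
    - intros x Hx. rewrite Rmin_left, Rmax_right in Hx by lra. apply cont_of_pt. auto. }
  split; [exists (minus (g s) (g a)); exact HI|].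
  rewrite (is_RInt_unique _ _ _ _ HI). reflexivity.
Qed.

Lemma curve_lower p q L : cc_length_of_curve_joining p q L -> kor_norm (hmul (hinv p) q) <= 4 * L.
Proof.
  intros (a & b & g1 & g2 & g3 & g1' & g2' & g3' & [Hab Hc] & Ha & Hb & pr & HL).
  subst p q.
  set (f := fun s => sqrt (g1' s ^ 2 + g2' s ^ 2)).
  assert (exf : ex_RInt f a b) by exact (ex_RInt_Reals_1 _ _ _ pr).
  assert (HLr : RInt f a b = L) by (rewrite <- HL; apply RInt_Reals).
  assert (f1 : forall x, Rabs (g1' x) <= f x).
  { intro x. unfold f. rewrite <- sqrt_Rsqr_abs. apply sqrt_le_1_alt.
    unfold Rsqr. pose proof (pow2_ge_0 (g2' x)). lra. }
  assert (f2 : forall x, Rabs (g2' x) <= f x).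
  { intro x. unfold f. rewrite <- sqrt_Rsqr_abs. apply sqrt_le_1_alt.
    unfold Rsqr. pose proof (pow2_ge_0 (g1' x)). lra. }
  assert (fpos : forall x, 0 <= f x) by (intro; apply sqrt_pos).
  assert (fsub : forall s, a <= s <= b -> ex_RInt f a s /\ RInt f a s <= L).
  { intros s Hs. assert (X1 : ex_RInt f a s) by (apply (ex_RInt_Chasles_1 f a s b); auto).
    assert (X2 : ex_RInt f s b) by (apply (ex_RInt_Chasles_2 f a s b); auto).
    split; [exact X1|].
    pose proof (RInt_Chasles f a s b X1 X2) as E. simpl in E. unfold plus in E; simpl in E.
    assert (0 <= RInt f s b) by (apply RInt_ge_0; auto; lra).
    lra. }
  assert (Hpart : forall (g g' : R -> R), (forall s, a <= s <= b -> derivable_pt_lim g s (g' s)) ->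
     (forall s, a <= s <= b -> continuity_pt g' s) -> (forall x, Rabs (g' x) <= f x) ->
     forall s, a <= s <= b -> Rabs (g s - g a) <= L).
  { intros g g' Hd Hcg Hf s Hs.
    destruct (ftc g g' a s ltac:(lra)) as [X E].
    - intros; apply Hd; lra.
    - intros; apply Hcg; lra.
    - rewrite <- E. destruct (fsub s Hs) as [Xf Hf'].
      eapply Rle_trans. { apply (RInt_abs_bound g' f a s 1); auto; try lra.
        intros; rewrite Rmult_1_l; auto. }
      lra. }
  assert (B1 : forall s, a <= s <= b -> Rabs (g1 s - g1 a) <= L).
  { apply (Hpart g1 g1'); auto; intros s Hs; apply (Hc s Hs). }
  assert (B2 : forall s, a <= s <= b -> Rabs (g2 s - g2 a) <= L).
  { apply (Hpart g2 g2'); auto; intros s Hs; apply (Hc s Hs). }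
  assert (HL0 : 0 <= L) by (pose proof (B1 a ltac:(lra)); pose proof (Rabs_pos (g1 a - g1 a)); lra).
  set (k := fun s => g3 s - g3 a + 2 * (g1 a * g2 s - g2 a * g1 s)).
  set (kd := fun s => 2 * ((g2 s - g2 a) * g1' s - (g1 s - g1 a) * g2' s)).
  destruct (ftc k kd a b ltac:(lra)) as [Xk Ek].
  { intros x Hx. destruct (Hc x Hx) as (D1 & D2 & D3 & _ & _ & _ & Hh).
    apply is_derive_Reals. apply is_derive_Reals in D1, D2, D3.
    unfold k, kd. auto_derive.
    - repeat split; eexists; eassumption.
    - replace (Derive (fun x => g3 x) x) with (g3' x) by (symmetry; apply is_derive_unique; exact D3).
      replace (Derive (fun x => g2 x) x) with (g2' x) by (symmetry; apply is_derive_unique; exact D2).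
      replace (Derive (fun x => g1 x) x) with (g1' x) by (symmetry; apply is_derive_unique; exact D1).
      rewrite Hh. ring. }
  { intros x Hx. destruct (Hc x Hx) as (D1 & D2 & _ & C1 & C2 & _ & _).
    assert (c1 : continuity_pt g1 x) by exact (derivable_continuous_pt g1 x (exist _ _ D1)).
    assert (c2 : continuity_pt g2 x) by exact (derivable_continuous_pt g2 x (exist _ _ D2)).
    change (continuity_pt (fct_cte 2 * ((g2 - fct_cte (g2 a)) * g1' - (g1 - fct_cte (g1 a)) * g2'))%F x).
    assert (cc : forall c, continuity_pt (fct_cte c) x)
      by (intro c; apply continuity_pt_const; unfold constant, fct_cte; auto).
    repeat first [apply continuity_pt_mult | apply continuity_pt_minus | apply cc | assumption]. }
  assert (Bk : Rabs (k b - k a) <= (4 * L) * L).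
  { rewrite <- Ek. rewrite <- HLr at 2. apply RInt_abs_bound; auto; try lra.
    intros x Hx. unfold kd.
    specialize (B1 x ltac:(lra)). specialize (B2 x ltac:(lra)).
    rewrite Rabs_mult, (Rabs_pos_eq 2) by lra.
    pose proof (Rabs_triang ((g2 x - g2 a) * g1' x) (- ((g1 x - g1 a) * g2' x))) as T.
    rewrite Rabs_Ropp, !Rabs_mult in T.
    assert (Rabs (g2 x - g2 a) * Rabs (g1' x) <= L * f x)
      by (apply Rmult_le_compat; auto using Rabs_pos).
    assert (Rabs (g1 x - g1 a) * Rabs (g2' x) <= L * f x)
      by (apply Rmult_le_compat; auto using Rabs_pos).
    unfold Rminus at 1. lra. }
  assert (Ek0 : k a = 0) by (unfold k; ring).
  rewrite Ek0, Rminus_0_r in Bk. unfold k in Bk.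
  specialize (B1 b ltac:(lra)). specialize (B2 b ltac:(lra)).
  simpl hinv; simpl hmul.
  replace (4 * L) with (2 * (2 * L)) by ring.
  apply kor_bound; [lra| | |].
  - replace (- g1 a + g1 b) with (g1 b - g1 a) by ring. lra.
  - replace (- g2 a + g2 b) with (g2 b - g2 a) by ring. lra.
  - replace (- g3 a + g3 b + 2 * (- g2 a * g1 b - - g1 a * g2 b))
      with (g3 b - g3 a + 2 * (g1 a * g2 b - g2 a * g1 b)) by ring.
    replace ((2 * L) ^ 2) with (4 * L * L) by ring. exact Bk.
Qed.

Lemma triple_eq (a b c a' b' c' : R) : a = a' -> b = b' -> c = c' -> (a, b, c) = (a', b', c').
Proof. intros -> -> ->. reflexivity. Qed.

Lemma strict_mono_ge (phi : nat -> nat) :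
  (forall n m, (n < m)%nat -> (phi n < phi m)%nat) -> forall n, (n <= phi n)%nat.
Proof.
  intros Hm n. induction n as [|n IH]; [lia|].
  specialize (Hm n (S n) ltac:(lia)). lia.
Qed.

Lemma nat_unbounded (y : R) : exists n : nat, y < INR n.
Proof.
  destruct (archimed (Rabs y)) as [H1 _].
  exists (Z.to_nat (up (Rabs y))).
  assert (0 <= Rabs y) by apply Rabs_pos.
  assert (0 <= up (Rabs y))%Z by (apply le_IZR; lra).
  rewrite INR_IZR_INZ, Z2Nat.id by lia.
  pose proof (Rle_abs y). lra.
Qed.

Lemma compact_bounded (K : H -> Prop) :
  seq_compact dH K -> exists R, 0 <= R /\ forall x, K x -> kor_norm x <= R.
Proof.
  intros HK. apply NNPP. intro Hn.
  assert (Hex : forall n : nat, exists x, K x /\ INR n < kor_norm x).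
  { intro n. apply NNPP. intro Hn2. apply Hn. exists (INR n). split; [apply pos_INR|].
    intros x Kx. apply Rnot_lt_le. intro Hl. apply Hn2. eauto. }
  set (u := fun n => proj1_sig (constructive_indefinite_description _ (Hex n))).
  assert (Hu : forall n, K (u n) /\ INR n < kor_norm (u n)).
  { intro n. unfold u. destruct (constructive_indefinite_description _ (Hex n)). simpl. exact a. }
  destruct (HK u (fun n => proj1 (Hu n))) as (phi & l & Hphi & Kl & Hcv).
  destruct (Hcv 1 ltac:(lra)) as [N HN].
  destruct (nat_unbounded (4 * (kor_norm l + 1))) as [n0 Hn0].
  set (n := max N n0).
  specialize (HN n ltac:(unfold n; lia)). unfold Rdist in HN. rewrite Rminus_0_r in HN.
  pose proof (proj2 (Hu (phi n))) as Hb.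
  assert (E : u (phi n) = hmul l (hmul (hinv l) (u (phi n))))
    by (rewrite <- hmul_assoc, hinv_r, hmul_0l; reflexivity).
  pose proof (kor_quasi l (hmul (hinv l) (u (phi n)))) as Q. rewrite <- E in Q.
  fold (dH l (u (phi n))) in Q. rewrite dH_sym in Q.
  pose proof (Rle_abs (dH (u (phi n)) l)).
  assert (INR n0 <= INR (phi n)).
  { apply le_INR. pose proof (strict_mono_ge phi Hphi n). unfold n in *. lia. }
  lra.
Qed.

Lemma surj v (w : coset_space v) : exists x, piR v x = w.
Proof.
  destruct w as [S HS]. destruct HS as [a Ha] eqn:E. exists a. subst S.
  unfold piR. f_equal; try apply proof_irrelevance.
Qed.

Definition hl (v1 v2 s : R) : H := (s * v1, s * v2, 0).

Lemma near_decomp v1 v2 a x r :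
  set_dist_cc (right_coset (v1, v2) a) (right_coset (v1, v2) x) < r ->
  exists u D, x = hmul (hl v1 v2 u) (hmul a D) /\ kor_norm D <= 4 * r.
Proof.
  intros Hd. destruct (set_dist_lt _ _ r (ex_intro _ a (coset_self _ a)) (ex_intro _ x (coset_self _ x)) Hd)
    as (p & q & Hp & Hq & Hpq).
  destruct (dcc_lt p q r Hpq) as (L & HL & HLr).
  pose proof (curve_lower p q L HL) as Hk.
  destruct Hp as (q1 & [s1 Hs1] & Hp). destruct Hq as (q2 & [s2 Hs2] & Hq).
  simpl in Hs1, Hs2. subst q1 q2.
  exists (s1 - s2), (hmul (hinv p) q). split; [|lra].
  subst p q. destruct a as [[a1 a2] a3]; destruct x as [[x1 x2] x3].
  unfold hl. simpl. apply triple_eq; ring.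
Qed.

Lemma near_decomp2 v1 v2 a x0 x r :
  set_dist_cc (right_coset (v1, v2) a) (right_coset (v1, v2) x0) < r ->
  set_dist_cc (right_coset (v1, v2) a) (right_coset (v1, v2) x) < r ->
  exists u E, x = hmul (hl v1 v2 u) (hmul x0 E) /\ kor_norm E <= 32 * r.
Proof.
  intros H0 H1.
  destruct (near_decomp _ _ _ _ _ H0) as (u0 & D0 & E0 & K0).
  destruct (near_decomp _ _ _ _ _ H1) as (u & D & E1 & K1).
  exists (u - u0), (hmul (hinv D0) D). split.
  - subst x x0. destruct a as [[a1 a2] a3]; destruct D as [[d1 d2] d3];
      destruct D0 as [[e1 e2] e3]. unfold hl. simpl. apply triple_eq; ring.
  - eapply Rle_trans; [apply kor_quasi|]. rewrite kor_inv. lra.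
Qed.

Lemma Rpower_m2 r : 0 < r -> Rpower r (Ropp 2) = / (r ^ 2).
Proof.
  intro Hr. replace 2 with (INR 2) at 1 by (simpl; ring). rewrite Rpower_Ropp.
  rewrite Rpower_pow by exact Hr. reflexivity.
Qed.

Lemma conj_formula v1 v2 uj u a1 a2 a3 E :
  hmul (hinv (hmul (hl v1 v2 uj) (a1, a2, a3))) (hmul (hl v1 v2 u) (hmul (a1, a2, a3) E))
  = hmul ((u - uj) * v1, (u - uj) * v2, 4 * (u - uj) * (v2 * a1 - v1 * a2)) E.
Proof.
  destruct E as [[e1 e2] e3]. unfold hl. simpl. apply triple_eq; ring.
Qed.

Theorem proposition6p7 (v : R * R) (hv : v <> (0, 0)) :
  locally_DS_regular dH (coset_dist v) (piR v) 2.
Proof.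
  split; [apply surj|].
  intros K HK. destruct (compact_bounded K HK) as [R [HR0 HRK]].
  split.
  { exists 1200. intros x y _ _. unfold coset_dist, piR; simpl.
    eapply Rle_trans; [apply set_dist_le; apply coset_self|apply dcc_bound]. }
  destruct v as [v1 v2].
  set (nv := Rabs v1 + Rabs v2).
  assert (Hnv : 0 < nv).
  { unfold nv. destruct (Req_dec v1 0) as [->|h1].
    - destruct (Req_dec v2 0) as [->|h2]; [exfalso; apply hv; reflexivity|].
      pose proof (Rabs_pos_lt _ h2). pose proof (Rabs_pos 0). lra.
    - pose proof (Rabs_pos_lt _ h1). pose proof (Rabs_pos v2). lra. }
  set (U := (4 * R + 64) / nv).
  assert (HU : 0 <= U) by (unfold U; apply Rmult_le_pos; [lra|]; left; apply Rinv_0_lt_compat; lra).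
  set (Mc := 1 + nv + 8 * nv * R).
  assert (HMc : 1 <= Mc) by (unfold Mc; nra).
  set (C := 1 + (2 * U + 2) + (8 * Mc + 128)).
  exists C, 1. split; [unfold C; lra|]. split; [lra|].
  intros w r Hr.
  assert (Hr2 : 0 < r ^ 2) by (apply pow_lt; lra).
  assert (Hpow : Rpower r (Ropp 2) = / r ^ 2) by (apply Rpower_m2; lra).
  destruct (classic (exists x0, K x0 /\ coset_dist (v1, v2) w (piR (v1, v2) x0) < r))
    as [[x0 [Kx0 Hx0]] | Hno].
  2:{ exists nil. simpl. split.
      - rewrite Hpow. apply Rmult_le_pos; [unfold C; lra|]. left; apply Rinv_0_lt_compat; lra.
      - intros x Kx Hd. exfalso. apply Hno. eauto. }
  destruct w as [S [a Ha]]. subst S.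
  unfold coset_dist, piR in *; simpl in *.
  set (d := r ^ 2).
  assert (Hd0 : 0 < d) by (unfold d; apply pow_lt; lra).
  assert (Hid : 0 < / d) by (apply Rinv_0_lt_compat; lra).
  set (N := S (Z.to_nat (up (2 * U / d)))).
  exists (map (fun j => hmul (hl v1 v2 (- U + INR j * d)) x0) (seq 0 N)).
  split.
  - rewrite length_map, length_seq. rewrite Hpow. fold d.
    unfold N. rewrite S_INR.
    destruct (archimed (2 * U / d)) as [A1 A2].
    assert (0 <= 2 * U / d) by (unfold Rdiv; apply Rmult_le_pos; [lra|left; apply Rinv_0_lt_compat; lra]).
    assert (0 <= up (2 * U / d))%Z by (apply le_IZR; lra).
    rewrite INR_IZR_INZ, Z2Nat.id by lia.
    assert (d <= 1) by (unfold d; simpl; nra).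
    assert (Hd1 : 1 <= / d) by (rewrite <- Rinv_1; apply Rinv_le_contravar; lra).
    assert (E2 : 2 * U / d = (2 * U) * / d) by reflexivity.
    assert (IZR (up (2 * U / d)) + 1 <= 2 * U * / d + 2 * / d) by lra.
    assert (C * / d >= (2 * U + 2) * / d).
    { apply Rle_ge, Rmult_le_compat_r; [left; apply Rinv_0_lt_compat; lra|unfold C; lra]. }
    assert ((2 * U + 2) * / d = 2 * U * / d + 2 * / d) by ring.
    change (/ (r * (r * 1))) with (/ d). lra.
  - intros x Kx Hx.
    destruct (near_decomp2 _ _ _ _ _ _ Hx0 Hx) as (u & E & Ex & KE).
    destruct x0 as [[a1 a2] a3]. destruct x as [[y1 y2] y3]. destruct E as [[e1 e2] e3].
    pose proof (HRK _ Kx0) as Bx0. pose proof (HRK _ Kx) as Bx.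
    destruct (kor_ge a1 a2 a3) as (A1 & A2 & A3).
    destruct (kor_ge y1 y2 y3) as (Y1 & Y2 & _).
    destruct (kor_ge e1 e2 e3) as (F1 & F2 & _).
    assert (Eq1 : y1 = u * v1 + (a1 + e1)) by (unfold hl in Ex; simpl in Ex; injection Ex; intros; lra).
    assert (Eq2 : y2 = u * v2 + (a2 + e2)) by (unfold hl in Ex; simpl in Ex; injection Ex; intros; lra).
    assert (Hu1 : Rabs (u * v1) <= 2 * R + 32).
    { replace (u * v1) with (y1 - a1 - e1) by lra. unfold Rminus.
      eapply Rle_trans; [apply Rabs_triang|]. rewrite Rabs_Ropp.
      eapply Rle_trans; [apply Rplus_le_compat_r; apply Rabs_triang|]. rewrite Rabs_Ropp. lra. }
    assert (Hu2 : Rabs (u * v2) <= 2 * R + 32).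
    { replace (u * v2) with (y2 - a2 - e2) by lra. unfold Rminus.
      eapply Rle_trans; [apply Rabs_triang|]. rewrite Rabs_Ropp.
      eapply Rle_trans; [apply Rplus_le_compat_r; apply Rabs_triang|]. rewrite Rabs_Ropp. lra. }
    rewrite !Rabs_mult in Hu1, Hu2.
    assert (HuU : Rabs u <= U).
    { unfold U. apply (Rmult_le_reg_r nv); [lra|]. unfold Rdiv. rewrite Rmult_assoc, Rinv_l by lra.
      unfold nv. lra. }
    assert (HuU' : - U <= u <= U) by (pose proof (Rle_abs u); pose proof (Rle_abs (-u)) as HH; rewrite Rabs_Ropp in HH; lra).
    clear HuU. rename HuU' into HuU.
    set (t := (u + U) / d).
    assert (Ht0 : 0 <= t) by (unfold t, Rdiv; apply Rmult_le_pos; [lra|left; apply Rinv_0_lt_compat; lra]).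
    assert (Ht1 : t <= 2 * U / d).
    { unfold t, Rdiv. apply Rmult_le_compat_r; [left; apply Rinv_0_lt_compat; lra|lra]. }
    destruct (archimed t) as [T1 T2].
    set (m := (up t - 1)%Z).
    assert (Em : IZR m = IZR (up t) - 1) by (unfold m; rewrite minus_IZR; reflexivity).
    assert (Hm0 : (0 <= m)%Z) by (assert (-1 < m)%Z by (apply lt_IZR; rewrite Em; lra); lia).
    destruct (archimed (2 * U / d)) as [B1 _].
    assert (HmN : (m < up (2 * U / d))%Z) by (apply lt_IZR; rewrite Em; lra).
    set (j := Z.to_nat m).
    assert (Ej : INR j = IZR m) by (unfold j; rewrite INR_IZR_INZ, Z2Nat.id by lia; reflexivity).
    exists (hmul (hl v1 v2 (- U + INR j * d)) (a1, a2, a3)). split.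
    + apply in_map_iff. exists j. split; [reflexivity|]. apply in_seq. unfold N, j. lia.
    + unfold dH. rewrite Ex, conj_formula.
      set (eta := u - (- U + INR j * d)).
      assert (Heta : 0 <= eta <= d).
      { unfold eta. rewrite Ej, Em.
        assert (t * d = u + U) by (unfold t; field; lra).
        assert (0 <= (t - (IZR (up t) - 1)) <= 1) by lra.
        assert (0 <= (t - (IZR (up t) - 1)) * d <= d) by (split; nra).
        lra. }
      assert (Hdr : d <= r) by (unfold d; simpl; nra).
      eapply Rle_lt_trans; [apply kor_quasi|].
      assert (HnvR : 0 <= nv * R) by (apply Rmult_le_pos; lra).
      assert (HnvM : nv <= Mc) by (unfold Mc; lra).
      assert (Hv1 : Rabs v1 <= nv) by (unfold nv; pose proof (Rabs_pos v2); lra).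
      assert (Hv2 : Rabs v2 <= nv) by (unfold nv; pose proof (Rabs_pos v1); lra).
      assert (Kg : kor_norm (eta * v1, eta * v2, 4 * eta * (v2 * a1 - v1 * a2)) <= 2 * (r * Mc)).
      { apply kor_bound.
        - nra.
        - rewrite Rabs_mult, (Rabs_pos_eq eta) by lra.
          assert (Rabs v1 <= Mc) by lra.
          apply Rmult_le_compat; try lra; apply Rabs_pos.
        - rewrite Rabs_mult, (Rabs_pos_eq eta) by lra.
          assert (Rabs v2 <= Mc) by lra.
          apply Rmult_le_compat; try lra; apply Rabs_pos.
        - assert (Hw : Rabs (v2 * a1 - v1 * a2) <= nv * R).
          { unfold Rminus. eapply Rle_trans; [apply Rabs_triang|].
            rewrite Rabs_Ropp, !Rabs_mult.
            assert (Rabs v2 * Rabs a1 <= Rabs v2 * R) by (apply Rmult_le_compat_l; [apply Rabs_pos|lra]).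
            assert (Rabs v1 * Rabs a2 <= Rabs v1 * R) by (apply Rmult_le_compat_l; [apply Rabs_pos|lra]).
            unfold nv. lra. }
          rewrite Rabs_mult, Rabs_mult, (Rabs_pos_eq 4), (Rabs_pos_eq eta) by lra.
          assert (4 * eta * Rabs (v2 * a1 - v1 * a2) <= 4 * d * (nv * R)).
          { apply Rmult_le_compat; [lra|apply Rabs_pos|lra|exact Hw]. }
          assert (4 * (nv * R) <= Mc * Mc) by (unfold Mc; nra).
          unfold d in *. replace ((r * Mc) ^ 2) with (r ^ 2 * (Mc * Mc)) by ring.
          assert (0 <= nv * R) by nra.
          nra. }
      assert (0 <= kor_norm (e1, e2, e3)) by apply kor_nonneg.
      unfold C. nra.
Qed.
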